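(* Let $\gamma\in(0,1)$. For every $\varepsilon>0$ there exists a constant $C=C(\gamma,\varepsilon)$ such that the following holds. Let $T\ge1$, let $\xi=(\xi_1,\dots,\xi_T)$ be i.i.d. Bernoulli($\gamma$) random variables, let $N:\{0,1\}^T\to\{0,1,\dots,T\}$ be any deterministic function, and set $S(\xi,m)=\sum_{i=1}^m\xi_i$. If $\mathbb E[N(\xi)]\ge C$, then $$(\gamma-\varepsilon)\,\mathbb E[N(\xi)]\le\mathbb E[S(\xi,N(\xi))]\le(\gamma+\varepsilon)\,\mathbb E[N(\xi)].$$ (That is, $\mathbb E[S(\xi,N(\xi))]/\mathbb E[N(\xi)]\to\gamma$ as $\mathbb E[N(\xi)]\to\infty$, uniformly in $T$ and $N$.) *)

(* Defs.v *)
From mathcomp Require Import all_boot all_order all_algebra.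
Set Implicit Arguments. Unset Strict Implicit. Unset Printing Implicit Defensive.
Import Order.TTheory GRing.Theory Num.Theory.
Local Open Scope ring_scope.

Definition bern_weight (R : realFieldType) (gamma : R) (T : nat)
  (x : {ffun 'I_T -> bool}) : R :=
  \prod_(i < T) (if x i then gamma else 1 - gamma).

Definition bern_expect (R : realFieldType) (gamma : R) (T : nat)
  (f : {ffun 'I_T -> bool} -> R) : R :=
  \sum_(x : {ffun 'I_T -> bool}) bern_weight gamma x * f x.

(* S(x, m) = sum_{i=1}^m x_i  (0-based: coordinates with index < m). *)
Definition partial_sum (T : nat) (x : {ffun 'I_T -> bool}) (m : nat) : nat :=
  \sum_(i < T | (i < m)%N) (x i : nat).

(* Main.v *)
Require Import Defs.
From mathcomp Require Import all_boot all_order all_algebra.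
From mathcomp Require Import reals.
From mathcomp Require Import exp sequences ring lra.
Import Order.TTheory GRing.Theory Num.Theory.
Local Open Scope ring_scope.

Section S.
Variable R : realType.

Lemma expR_upper (x : R) : x <= 1/2 -> expR x <= 1 + x + 2 * x ^+ 2.
Proof.
move=> hx.
have h1 : 1 - x <= expR (- x) by have := expR_ge1Dx (- x); rewrite -[1 - x]/(1 + - x).
have hpos : 0 < 1 - x by lra.
rewrite expRN in h1.
have hE := expR_gt0 x.
have : expR x <= (1 - x)^-1.
  by rewrite -(invrK (expR x)) lef_pV2 ?posrE ?invr_gt0.
move=> h; apply: (le_trans h).
rewrite -(@ler_pM2l _ (1 - x)) // mulfV ?gt_eqF //.
have : 0 <= x ^+ 2 * (1 - 2 * x) by rewrite mulr_ge0 ?sqr_ge0 //; lra.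
move=> h2; nra.
Qed.

Lemma geom_bound (q : R) n : 0 <= q < 1 ->
  \sum_(m < n) q ^+ m <= (1 - q)^-1.
Proof.
move=> /andP[q0 q1].
have e : (1 - q) * \sum_(m < n) q ^+ m = 1 - q ^+ n.
  elim: n => [|n IH]; first by rewrite big_ord0 expr0; ring.
  by rewrite big_ord_recr /= mulrDr IH exprS; ring.
have hpos : 0 < 1 - q by lra.
rewrite -(@ler_pM2l _ (1 - q)) // e mulfV ?gt_eqF //.
have := exprn_ge0 n q0; lra.
Qed.

Lemma phi_bound (g e : R) (d : bool -> R) : 0 <= g <= 1 -> 0 < e ->
  (forall b, - (1 + e) <= d b <= 1 + e) -> g * d true + (1 - g) * d false = - e ->
  g * expR (e / (4 * (1 + e) ^+ 2) * d true)
    + (1 - g) * expR (e / (4 * (1 + e) ^+ 2) * d false)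
  <= 1 - e / (4 * (1 + e) ^+ 2) * e / 2.
Proof.
move=> /andP[g0 g1] e0 hd hm.
set lam := e / (4 * (1 + e) ^+ 2).
have l0 : 0 < lam by rewrite /lam divr_gt0 // mulr_gt0 // exprn_gt0 //; lra.
have l2 : lam * (1 + e) ^+ 2 = e / 4.
  rewrite /lam; field; rewrite gt_eqF //; lra.
have l1 : lam * (1 + e) <= 1/4.
  have ep : 0 < 1 + e by lra.
  rewrite expr2 mulrA in l2; nra.
have hb : forall b, expR (lam * d b) <= 1 + lam * d b + 2 * (lam * d b) ^+ 2.
  move=> b; apply: expR_upper; have := hd b; move=> /andP[h1 h2]; nra.
have hsq : forall b, (lam * d b) ^+ 2 <= lam ^+ 2 * (1 + e) ^+ 2.
  move=> b; rewrite exprMn ler_pM2l ?exprn_gt0 //.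
  have := hd b; move=> /andP[h1 h2]; rewrite !expr2; nra.
have ht := hb true; have hf := hb false; have st := hsq true; have sf := hsq false.
have e2 : lam ^+ 2 * (1 + e) ^+ 2 = lam * (e / 4) by rewrite -l2; ring.
rewrite e2 in st sf.
have : g * (1 + lam * d true + 2 * (lam * d true) ^+ 2)
  + (1 - g) * (1 + lam * d false + 2 * (lam * d false) ^+ 2)
  <= 1 - lam * e / 2.
  have -> : g * (1 + lam * d true + 2 * (lam * d true) ^+ 2)
  + (1 - g) * (1 + lam * d false + 2 * (lam * d false) ^+ 2)
   = 1 + lam * (g * d true + (1 - g) * d false) + 2 * (g * (lam * d true) ^+ 2 + (1 - g) * (lam * d false) ^+ 2) by ring.
  rewrite hm.
  have : g * (lam * d true) ^+ 2 + (1 - g) * (lam * d false) ^+ 2 <= lam * (e / 4).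
    have h1g : 0 <= 1 - g by lra.
    have := ler_wpM2l g0 st; have := ler_wpM2l h1g sf. lra.
  lra.
move=> H; apply: le_trans H.
apply: lerD; apply: ler_wpM2l => //; lra.
Qed.

Lemma expect_exp (g lam : R) (d : bool -> R) T m : (m <= T)%N ->
  \sum_(x : {ffun 'I_T -> bool}) bern_weight g x
     * expR (lam * \sum_(i < T | (i < m)%N) d (x i))
  = (g * expR (lam * d true) + (1 - g) * expR (lam * d false)) ^+ m.
Proof.
move=> mT; rewrite /bern_weight.
under eq_bigr => x _ do rewrite mulr_sumr expR_sum [X in _ * X]big_mkcond -big_split /=.
rewrite -(bigA_distr_bigA (fun (i : 'I_T) (b : bool) => (if b then g else 1 - g) *
   (if (i < m)%N then expR (lam * d b) else 1))) /=.
under eq_bigr => i _ do rewrite big_bool /=.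
rewrite (eq_bigr (fun i : 'I_T => if (i < m)%N then
    g * expR (lam * d true) + (1 - g) * expR (lam * d false) else 1)); last first.
  by move=> i _; case: ifP => _ //; rewrite !mulr1; ring.
rewrite -big_mkcond /= (big_ord_narrow mT).
by rewrite prodr_const card_ord.
Qed.

Lemma key (g lam : R) (d : bool -> R) T (N : {ffun 'I_T -> bool} -> nat) :
  0 <= g <= 1 -> 0 < lam -> (forall x, (N x <= T)%N) ->
  bern_expect g (fun x => \sum_(i < T | (i < N x)%N) d (x i))
  <= lam^-1 * \sum_(m < T.+1)
       (g * expR (lam * d true) + (1 - g) * expR (lam * d false)) ^+ m.
Proof.
move=> /andP[g0 g1] l0 NT.
have wpos x : 0 <= bern_weight g x.
  by apply: prodr_ge0 => i _; case: (x i) => //; lra.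
have li : 0 <= lam^-1 by rewrite invr_ge0 ltW.
have pt x : \sum_(i < T | (i < N x)%N) d (x i) <= lam^-1 *
    \sum_(m < T.+1) expR (lam * \sum_(i < T | (i < m)%N) d (x i)).
  set y := \sum_(i < T | (i < N x)%N) d (x i).
  have hN : (N x < T.+1)%N by rewrite ltnS.
  have h1 : y <= lam^-1 * expR (lam * y).
    have := expR_ge1Dx (lam * y) => h.
    have h2 : lam * y <= expR (lam * y) by lra.
    have e : lam^-1 * (lam * y) = y by rewrite mulrA mulVf ?mul1r // gt_eqF.
    by rewrite -{1}e; apply: ler_wpM2l.
  apply: (le_trans h1); rewrite ler_wpM2l // (bigD1 (Ordinal hN)) //= lerDl.
  by apply: sumr_ge0 => m _; apply: expR_ge0.
rewrite /bern_expect.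
apply: (le_trans (y := \sum_x bern_weight g x * (lam^-1 *
    \sum_(m < T.+1) expR (lam * \sum_(i < T | (i < m)%N) d (x i))))).
  by apply: ler_sum => x _; apply: ler_wpM2l.
under eq_bigr => x _ do rewrite mulrCA mulr_sumr.
rewrite -mulr_sumr exchange_big /= le_eqVlt; apply/orP; left; apply/eqP.
congr (_ * _); apply: eq_bigr => m _; apply: expect_exp.
by rewrite -ltnS ltn_ord.
Qed.

Lemma sum_d (c : R) T (x : {ffun 'I_T -> bool}) n : (n <= T)%N ->
  \sum_(i < T | (i < n)%N) ((x i : nat)%:R - c) = (partial_sum x n)%:R - c * n%:R.
Proof.
move=> nT; rewrite sumrB /partial_sum natr_sum; congr (_ - _).
by rewrite (big_ord_narrow nT) sumr_const card_ord mulr_natr.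
Qed.

Lemma expect_lin (g c : R) T (f h : {ffun 'I_T -> bool} -> R) :
  bern_expect g (fun x => f x - c * h x) = bern_expect g f - c * bern_expect g h.
Proof.
rewrite /bern_expect mulr_sumr -sumrB; apply: eq_bigr => x _; ring.
Qed.

Lemma side (g e : R) (d : bool -> R) T (N : {ffun 'I_T -> bool} -> nat) :
  0 <= g <= 1 -> 0 < e -> (forall x, (N x <= T)%N) ->
  (forall b, - (1 + e) <= d b <= 1 + e) -> g * d true + (1 - g) * d false = - e ->
  bern_expect g (fun x => \sum_(i < T | (i < N x)%N) d (x i))
  <= (e / (4 * (1 + e) ^+ 2))^-1 * (e / (4 * (1 + e) ^+ 2) * e / 2)^-1.
Proof.
move=> gb e0 NT hd hm.
set lam := e / (4 * (1 + e) ^+ 2).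
have l0 : 0 < lam by rewrite /lam divr_gt0 // mulr_gt0 // exprn_gt0 //; lra.
have l2 : lam * (1 + e) ^+ 2 = e / 4.
  rewrite /lam; field; rewrite gt_eqF //; lra.
have ep : 0 < 1 + e by lra.
have l1 : lam * e <= 1.
  rewrite expr2 mulrA in l2; nra.
have K := @key g lam d T N gb l0 NT. apply: (le_trans K).
apply: ler_wpM2l; first by rewrite invr_ge0 ltW.
set phi := (X in \sum_(m < _) X ^+ _).
have hphi : phi <= 1 - lam * e / 2 by apply: phi_bound.
have p0 : 0 <= phi.
  case/andP: gb => g0 g1.
  by rewrite /phi addr_ge0 // mulr_ge0 ?expR_ge0 //; lra.
have -> : lam * e / 2 = 1 - (1 - lam * e / 2) by ring.
have q0 : 0 <= 1 - lam * e / 2 < 1.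
  apply/andP; split; [lra|].
  have : 0 < lam * e by rewrite mulr_gt0.
  lra.
apply: (le_trans _ (geom_bound _ T.+1 q0)).
apply: ler_sum => m _; apply: lerXn2r => //; rewrite nnegrE //; lra.
Qed.
End S.

Theorem mainTheorem11 (R : realType) (gamma : R) :
  0 < gamma < 1 ->
  forall eps : R, 0 < eps ->
  exists C : R, forall (T : nat) (N : {ffun 'I_T -> bool} -> nat),
    (1 <= T)%N ->
    (forall x, (N x <= T)%N) ->
    C <= bern_expect gamma (fun x => (N x)%:R) ->
    (gamma - eps) * bern_expect gamma (fun x => (N x)%:R)
      <= bern_expect gamma (fun x => (partial_sum x (N x))%:R)
    /\ bern_expect gamma (fun x => (partial_sum x (N x))%:R)
      <= (gamma + eps) * bern_expect gamma (fun x => (N x)%:R).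
Proof.
move=> /andP[g0 g1] eps e0.
set e := eps / 2.
have ep : 0 < e by rewrite /e divr_gt0.
set K := (e / (4 * (1 + e) ^+ 2))^-1 * (e / (4 * (1 + e) ^+ 2) * e / 2)^-1.
exists (K / e) => T N T1 NT hC.
have gb : 0 <= gamma <= 1 by apply/andP; split; lra.
set EN := bern_expect gamma (fun x => (N x)%:R).
set ES := bern_expect gamma (fun x => (partial_sum x (N x))%:R).
have hK : K <= e * EN.
  have -> : K = e * (K / e) by rewrite mulrC -mulrA mulVf ?mulr1 // gt_eqF.
  by apply: ler_wpM2l => //; apply: ltW.
have U := @side R gamma e (fun b => (b : nat)%:R - (gamma + e)) T N gb ep NT.
have L := @side R gamma e (fun b => (gamma - e) - (b : nat)%:R) T N gb ep NT.
have eqU : bern_expect gamma (fun x => \sum_(i < T | (i < N x)%N)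
     ((x i : nat)%:R - (gamma + e))) = ES - (gamma + e) * EN.
  rewrite /ES /EN /bern_expect mulr_sumr -sumrB; apply: eq_bigr => x _.
  rewrite sum_d //; ring.
have eqL : bern_expect gamma (fun x => \sum_(i < T | (i < N x)%N)
     ((gamma - e) - (x i : nat)%:R)) = (gamma - e) * EN - ES.
  rewrite /ES /EN /bern_expect mulr_sumr -sumrB; apply: eq_bigr => x _.
  have -> : \sum_(i < T | (i < N x)%N) ((gamma - e) - (x i : nat)%:R)
     = - \sum_(i < T | (i < N x)%N) ((x i : nat)%:R - (gamma - e)).
    by rewrite -sumrN; apply: eq_bigr => i _; rewrite opprB.
  rewrite sum_d //; ring.
have hU : ES - (gamma + e) * EN <= K.
  rewrite -eqU; apply: U.
    by case => /=; rewrite ?mulr1n ?mulr0n; apply/andP; split; lra.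
  by rewrite /= mulr1n mulr0n; ring.
have hL : (gamma - e) * EN - ES <= K.
  rewrite -eqL; apply: L.
    by case => /=; rewrite ?mulr1n ?mulr0n; apply/andP; split; lra.
  by rewrite /= mulr1n mulr0n; ring.
have eE : eps = 2 * e by rewrite /e; field.
rewrite eE; split; lra.
Qed.
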